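(* Let $\beta\in(1,2)$. There exists a positive constant $C$, independent of $h$ and $\psi$, such that for every grid function $\psi$ as in the context, $$C\Big(\frac{2}{\pi}\Big)^{\beta}\frac{2^{\frac{\beta-2}{2}}}{4\pi^2}\,\|\psi\|^2_{L^2_h}\le\big((-\Delta_h)^{\frac{\beta}{2}}\psi,\psi\big)_{h^2}\le 2^{\frac{\beta}{2}}\frac{\pi^{\beta}}{h^{\beta}}\,\|\psi\|^2_{L^2_h}.$$
   Context: Let $L>0$, $M\in\mathbb{Z}^+$, $h=2L/M$, $x_j=-L+jh$, $y_k=-L+kh$. Consider grid functions $\psi=\{\psi_{jk}\}_{j,k\in\mathbb{Z}}$ with $\psi_{jk}=0$ unless $1\le j,k\le M-1$ (i.e. vanishing on the boundary of $(-L,L)^2$ and outside it). The inner product and norm are $(w,v)_{h^2}=h^2\sum_{j=1}^{M-1}\sum_{k=1}^{M-1}w_{jk}v_{jk}$, $\|w\|^2_{L^2_h}=(w,w)_{h^2}$. The fractional centered difference operator is $$\big((-\Delta_h)^{\frac{\beta}{2}}\psi\big)_{jk}=\frac{1}{h^\beta}\sum_{l,m\in\mathbb{Z}}a^{(\beta)}_{l,m}\psi_{j+l,k+m},\qquad a^{(\beta)}_{l,m}=\frac{1}{4\pi^2}\int_{-\pi}^{\pi}\!\!\int_{-\pi}^{\pi}\Big[4\sin^2\tfrac{\eta_1}{2}+4\sin^2\tfrac{\eta_2}{2}\Big]^{\frac{\beta}{2}}e^{-\mathbf{i}(\eta_1 l+\eta_2 m)}\,d\eta_1 d\eta_2 .$$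 *)

(* Defs.v *)
From Stdlib Require Import Reals ZArith.
From Coquelicot Require Import Coquelicot.
Open Scope R_scope.

(* real power x^y, with the convention 0^y = 0 (y > 0) at x = 0 *)
Definition rpow (x y : R) : R := if Rle_dec x 0 then 0 else Rpower x y.

Definition symb (beta e1 e2 : R) : R :=
  rpow (4 * (sin (e1/2))^2 + 4 * (sin (e2/2))^2) (beta/2).

(* a^{(beta)}_{l,m} = 1/(4 pi^2) \int\int symb(e) e^{-i(e1 l + e2 m)} de.
   Since symb is even in each variable, the imaginary part (sine integral)
   vanishes, and the coefficient is the (real) cosine integral below. *)
Definition acoef (beta : R) (l m : Z) : R :=
  / (4 * PI ^ 2) *
  RInt (fun e1 => RInt (fun e2 =>
          symb beta e1 e2 * cos (e1 * IZR l + e2 * IZR m)) (- PI) PI)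
       (- PI) PI.

Definition supported (M : nat) (psi : Z -> Z -> R) : Prop :=
  forall j k : Z,
    ~ ((1 <= j <= Z.of_nat M - 1)%Z /\ (1 <= k <= Z.of_nat M - 1)%Z) ->
    psi j k = 0.

Definition gsum (M : nat) (F : Z -> Z -> R) : R :=
  sum_n_m (fun p : nat => sum_n_m (fun q : nat => F (Z.of_nat p) (Z.of_nat q))
                                  1 (M - 1)) 1 (M - 1).

Definition inner_h (h : R) (M : nat) (w v : Z -> Z -> R) : R :=
  h ^ 2 * gsum M (fun j k => w j k * v j k).

(* ((-Delta_h)^{beta/2} psi)_{jk} = h^{-beta} sum_{l,m in Z} a_{l,m} psi_{j+l,k+m};
   as psi is supported on 1..M-1, the sum over Z reduces to p = j+l, q = k+m
   ranging over 1..M-1. *)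
Definition frac_lap (beta h : R) (M : nat) (psi : Z -> Z -> R) : Z -> Z -> R :=
  fun j k => / Rpower h beta *
     gsum M (fun p q => acoef beta (p - j)%Z (q - k)%Z * psi p q).

(* Main.v *)
Require Import Defs.
From Stdlib Require Import Reals ZArith Lra Lia Psatz FunctionalExtensionality.
From Coquelicot Require Import Coquelicot.
Open Scope R_scope.


Definition good (f : R -> R -> R) := forall x y, continuity_2d_pt f x y.

Lemma good_sec f x y : good f -> continuous (fun v => f x v) y.
Proof.
  intros Hf. apply continuity_pt_filterlim.
  intros eps Heps. destruct (Hf x y (mkposreal eps Heps)) as [d Hd].
  exists d. split. apply cond_pos. intros v [_ Hv]. simpl in Hv |- *. unfold R_dist in *.
  apply Hd. rewrite Rminus_diag, Rabs_R0. apply cond_pos. exact Hv.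
Qed.

Lemma good_ex f x a b : good f -> ex_RInt (fun v => f x v) a b.
Proof. intros Hf. apply (@ex_RInt_continuous R_CompleteNormedModule). intros z _. now apply good_sec. Qed.

Lemma param_cont f a b : a <= b -> good f -> forall x0,
  continuity_pt (fun x => RInt (fun v => f x v) a b) x0.
Proof.
  intros Hab Hf x0 eps Heps.
  assert (He' : 0 < eps / (b - a + 1)) by (apply Rdiv_lt_0_compat; lra).
  destruct (uniform_continuity_2d f (x0 - 1) (x0 + 1) a b (fun x y _ _ => Hf x y)
     (mkposreal _ He')) as [delta Hd].
  exists (Rmin delta 1). split. { apply Rmin_pos; [apply cond_pos|lra]. }
  intros x [_ Hx]. simpl in Hx. unfold R_dist in Hx |- *. simpl. unfold R_dist.
  assert (Hx1 : Rabs (x - x0) < delta) by (eapply Rlt_le_trans; [exact Hx| apply Rmin_l]).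
  assert (Hx2 : Rabs (x - x0) < 1) by (eapply Rlt_le_trans; [exact Hx| apply Rmin_r]).
  rewrite <- (RInt_minus (fun v => f x v) (fun v => f x0 v)) by (apply good_ex; auto).
  eapply Rle_lt_trans.
  apply (abs_RInt_le_const _ a b (eps / (b - a + 1))); auto.
  { apply ex_RInt_minus; apply good_ex; auto. }
  { intros t Ht. apply Rlt_le. unfold minus, plus, opp; simpl.
    apply (Hd x0 t x t).
    - lra.
    - lra.
    - apply Rabs_lt_between' in Hx2. lra.
    - lra.
    - exact Hx1.
    - rewrite Rminus_diag, Rabs_R0. apply cond_pos. }
  apply Rmult_lt_reg_r with (b - a + 1). lra.
  replace ((b - a) * (eps / (b - a + 1)) * (b - a + 1)) with ((b-a) * eps) by (field; lra). nra.
Qed.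

Definition I2 (f : R -> R -> R) : R :=
  RInt (fun x => RInt (fun y => f x y) (- PI) PI) (- PI) PI.

Lemma good_ex_out f : good f -> ex_RInt (fun x => RInt (fun y => f x y) (- PI) PI) (- PI) PI.
Proof.
  intros Hf. apply (@ex_RInt_continuous R_CompleteNormedModule). intros z _.
  apply continuity_pt_filterlim. apply param_cont; auto.
  pose proof PI_RGT_0; lra.
Qed.

Lemma good_plus f g : good f -> good g -> good (fun x y => f x y + g x y).
Proof. intros Hf Hg x y. apply continuity_2d_pt_plus; auto. Qed.
Lemma good_mult f g : good f -> good g -> good (fun x y => f x y * g x y).
Proof. intros Hf Hg x y. apply continuity_2d_pt_mult; auto. Qed.
Lemma good_const c : good (fun _ _ => c).
Proof. intros x y. apply continuity_2d_pt_const. Qed.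

Lemma I2_plus f g : good f -> good g -> I2 (fun x y => f x y + g x y) = I2 f + I2 g.
Proof.
  intros Hf Hg. unfold I2.
  rewrite <- (RInt_plus (fun x => RInt (fun y => f x y) (-PI) PI) (fun x => RInt (fun y => g x y) (-PI) PI)) by (apply good_ex_out; auto).
  apply RInt_ext. intros x _.
  rewrite <- (RInt_plus (fun y => f x y) (fun y => g x y)) by (apply good_ex; auto).
  reflexivity.
Qed.

Lemma I2_scal c f : good f -> I2 (fun x y => c * f x y) = c * I2 f.
Proof.
  intros Hf. unfold I2.
  rewrite <- (RInt_scal (fun x => RInt (fun y => f x y) (-PI) PI)) by (apply good_ex_out; auto).
  apply RInt_ext. intros x _.
  rewrite <- (RInt_scal (fun y => f x y)) by (apply good_ex; auto).
  reflexivity.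
Qed.

Lemma I2_le f g : good f -> good g ->
  (forall x y, -PI <= x <= PI -> -PI <= y <= PI -> f x y <= g x y) -> I2 f <= I2 g.
Proof.
  intros Hf Hg H. pose proof PI_RGT_0. unfold I2. apply RInt_le; try lra; try (apply good_ex_out; auto).
  intros x Hx. apply RInt_le; try lra; try (apply good_ex; auto).
  intros y Hy. apply H; lra.
Qed.

Lemma good_sum F n m : (forall k, good (F k)) -> good (fun x y => sum_n_m (fun k => F k x y) n m).
Proof.
  intros HF. induction m.
  - destruct n.
    + intros x y. apply (continuity_2d_pt_ext (F 0%nat)). intros; symmetry; apply (sum_n_n (fun k => F k x0 y0)). apply HF.
    + intros x y. apply (continuity_2d_pt_ext (fun _ _ => 0)). intros; symmetry; apply (sum_n_m_zero (fun k => F k x0 y0)); lia. apply good_const.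
  - destruct (le_lt_dec n (S m)).
    + intros x y. apply (continuity_2d_pt_ext (fun x y => sum_n_m (fun k => F k x y) n m + F (S m) x y)). intros; symmetry; apply (sum_n_Sm (fun k => F k x0 y0)); lia.
      apply (good_plus _ _ IHm (HF (S m))).
    + intros x y. apply (continuity_2d_pt_ext (fun _ _ => 0)). intros; symmetry; apply (sum_n_m_zero (fun k => F k x0 y0)); lia. apply good_const.
Qed.

Lemma I2_zero : I2 (fun _ _ => 0) = 0.
Proof.
  unfold I2. rewrite (RInt_ext _ (fun _ => 0)). rewrite RInt_const. unfold scal; simpl; unfold mult; simpl; ring.
  intros. rewrite RInt_const. unfold scal; simpl; unfold mult; simpl; ring.
Qed.

Lemma I2_sum F n m : (forall k, good (F k)) ->
  I2 (fun x y => sum_n_m (fun k => F k x y) n m) = sum_n_m (fun k => I2 (F k)) n m.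
Proof.
  intros HF. induction m.
  - destruct n.
    + rewrite sum_n_n. f_equal. extensionality x; extensionality y. apply (sum_n_n (fun k => F k x y)).
    + rewrite (sum_n_m_zero (fun k => I2 (F k))) by lia.
      transitivity (I2 (fun _ _ => 0)); [|apply I2_zero].
      unfold I2. apply RInt_ext. intros x _. apply RInt_ext. intros y _.
      apply (sum_n_m_zero (fun k => F k x y)); lia.
  - destruct (le_lt_dec n (S m)).
    + rewrite sum_n_Sm by lia. rewrite <- IHm.
      rewrite <- I2_plus.
      unfold I2. apply RInt_ext. intros x _. apply RInt_ext. intros y _.
      apply (sum_n_Sm (fun k => F k x y)); lia.
      apply good_sum; auto. auto.
    + rewrite (sum_n_m_zero (fun k => I2 (F k))) by lia.
      transitivity (I2 (fun _ _ => 0)); [|apply I2_zero].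
      unfold I2. apply RInt_ext. intros x _. apply RInt_ext. intros y _.
      apply (sum_n_m_zero (fun k => F k x y)); lia.
Qed.


Lemma sumR_plus (u v : nat -> R) n m : sum_n_m (fun k => u k + v k) n m = sum_n_m u n m + sum_n_m v n m.
Proof. exact (sum_n_m_plus u v n m). Qed.
Lemma sumR_mult_l (c : R) (u : nat -> R) n m : sum_n_m (fun k => c * u k) n m = c * sum_n_m u n m.
Proof. exact (sum_n_m_mult_l (K:=R_Ring) c u n m). Qed.

Lemma sumR_ext (u v : nat -> R) n m : (forall k, u k = v k) -> sum_n_m u n m = sum_n_m v n m.
Proof. exact (sum_n_m_ext u v n m). Qed.

Lemma gsum_ext M F G : (forall p q, F p q = G p q) -> gsum M F = gsum M G.
Proof. intros H. unfold gsum. apply sum_n_m_ext. intros p. apply sum_n_m_ext. intros q. apply H. Qed.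

Lemma gsum_plus M F G : gsum M (fun p q => F p q + G p q) = gsum M F + gsum M G.
Proof.
  unfold gsum. rewrite <- sumR_plus. apply sum_n_m_ext. intros p.
  rewrite <- sumR_plus. reflexivity.
Qed.

Lemma gsum_mult_l M c F : c * gsum M F = gsum M (fun p q => c * F p q).
Proof.
  unfold gsum. rewrite <- sumR_mult_l. apply sum_n_m_ext. intros p.
  rewrite <- sumR_mult_l. reflexivity.
Qed.

Lemma gsum_le M F G : (forall p q, F p q <= G p q) -> gsum M F <= gsum M G.
Proof. intros H. unfold gsum. apply sum_n_m_le. intros p. apply sum_n_m_le. intros q. apply H. Qed.

Lemma gsum_const M c : gsum M (fun _ _ => c) = INR (M - 1) * (INR (M - 1) * c).
Proof.
  unfold gsum. rewrite sum_n_m_ext with (b := fun _ => INR (M-1) * c).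
  rewrite sum_n_m_const. replace (S (M - 1) - 1)%nat with (M - 1)%nat by lia. reflexivity.
  intros p. rewrite sum_n_m_const. replace (S (M - 1) - 1)%nat with (M - 1)%nat by lia. reflexivity.
Qed.

Lemma sum_zero_loc (a : nat -> R) n m : (forall k, (n <= k <= m)%nat -> a k = 0) -> sum_n_m a n m = 0.
Proof.
  intros H. rewrite (sum_n_m_ext_loc a (fun _ => zero)). exact (@sum_n_m_const_zero R_AbelianMonoid n m). exact H.
Qed.

Lemma sum_delta (a : nat -> R) j n m : (n <= j <= m)%nat ->
  sum_n_m (fun p => if Z.eq_dec (Z.of_nat p - Z.of_nat j) 0 then a p else 0) n m = a j.
Proof.
  intros Hj.
  rewrite (sum_n_m_Chasles _ n j m) by lia.
  rewrite (sum_zero_loc _ (S j) m).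
  2:{ intros k Hk. destruct Z.eq_dec; [lia|reflexivity]. }
  destruct (Nat.eq_dec j n) as [->|Hne].
  - rewrite sum_n_n. destruct Z.eq_dec; [|lia]. unfold plus; simpl; ring.
  - destruct j as [|j']; [lia|].
    rewrite sum_n_Sm by lia. rewrite (sum_zero_loc _ n j').
    2:{ intros k Hk. destruct Z.eq_dec; [lia|reflexivity]. }
    destruct Z.eq_dec; [|lia]. unfold plus; simpl; ring.
Qed.

Definition orth (l m : Z) : R :=
  if Z.eq_dec l 0 then if Z.eq_dec m 0 then 4 * PI ^ 2 else 0 else 0.

Lemma gsum_delta M F j k : (1 <= j <= M - 1)%nat -> (1 <= k <= M - 1)%nat ->
  gsum M (fun p q => F p q * orth (p - Z.of_nat j) (q - Z.of_nat k))
  = F (Z.of_nat j) (Z.of_nat k) * (4 * PI ^ 2).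
Proof.
  intros Hj Hk. unfold gsum.
  rewrite (sumR_ext _ (fun p => if Z.eq_dec (Z.of_nat p - Z.of_nat j) 0 then
      F (Z.of_nat p) (Z.of_nat k) * (4 * PI ^ 2) else 0)).
  apply sum_delta; auto.
  intros p. unfold orth. destruct Z.eq_dec.
  - rewrite (sumR_ext _ (fun q => if Z.eq_dec (Z.of_nat q - Z.of_nat k) 0 then
      F (Z.of_nat p) (Z.of_nat q) * (4 * PI ^ 2) else 0)).
    apply (sum_delta (fun q => F (Z.of_nat p) (Z.of_nat q) * (4 * PI ^ 2))); auto.
    intros q. case Z.eq_dec; intros; ring.
  - apply sum_zero_loc. intros; ring.
Qed.


Lemma RInt_cos_lin c (m : Z) :
  RInt (fun y => cos (c + y * IZR m)) (- PI) PI = if Z.eq_dec m 0 then 2 * PI * cos c else 0.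
Proof.
  destruct (Z.eq_dec m 0) as [->|Hm].
  - rewrite (RInt_ext _ (fun _ => cos c)). rewrite RInt_const. unfold scal; simpl; unfold mult; simpl. ring.
    intros x _. f_equal. simpl. ring.
  - assert (Hm' : IZR m <> 0) by (apply not_0_IZR; exact Hm).
    apply is_RInt_unique.
    replace 0 with (minus ((fun y => sin (c + y * IZR m) / IZR m) PI) ((fun y => sin (c + y * IZR m) / IZR m) (- PI))).
    apply (is_RInt_derive (fun y => sin (c + y * IZR m) / IZR m)).
    + intros x _. auto_derive. auto. field. auto.
    + intros x _. apply (ex_derive_continuous (fun y => cos (c + y * IZR m))). auto_derive. auto.
    + unfold minus, plus, opp; simpl.
      assert (Hs : sin (IZR m * PI) = 0) by (apply sin_eq_0_1; exists m; reflexivity).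
      replace (c + PI * IZR m) with (c + IZR m * PI) by ring.
      replace (c + - PI * IZR m) with (c - IZR m * PI) by ring.
      rewrite sin_plus, sin_minus, Hs. field. auto.
Qed.

Lemma I2_orth l m : I2 (fun x y => cos (x * IZR l + y * IZR m)) = orth l m.
Proof.
  unfold I2, orth.
  rewrite (RInt_ext _ (fun x => if Z.eq_dec m 0 then 2 * PI * cos (0 + x * IZR l) else 0)).
  2:{ intros x _. rewrite RInt_cos_lin. replace (0 + x * IZR l) with (x * IZR l) by ring. reflexivity. }
  destruct (Z.eq_dec m 0).
  - assert (Hex : ex_RInt (fun x => cos (0 + x * IZR l)) (-PI) PI).
    { apply (@ex_RInt_continuous R_CompleteNormedModule). intros z _.
        apply (ex_derive_continuous (fun y => cos (0 + y * IZR l))). auto_derive. auto. }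
    pose proof (RInt_scal (V:=R_CompleteNormedModule) _ _ _ (2 * PI) Hex) as H.
    unfold scal in H; simpl in H; unfold mult in H; simpl in H. rewrite H. clear H.
    rewrite RInt_cos_lin. unfold scal; simpl; unfold mult; simpl.
    destruct (Z.eq_dec l 0); rewrite ?cos_0; ring.
  - rewrite RInt_const. unfold scal; simpl; unfold mult; simpl. destruct (Z.eq_dec l 0); ring.
Qed.


Lemma cR_plus (f g : R -> R) x : continuous f x -> continuous g x -> continuous (fun y => f y + g y) x.
Proof. exact (continuous_plus f g x). Qed.
Lemma cR_mult (f g : R -> R) x : continuous f x -> continuous g x -> continuous (fun y => f y * g y) x.
Proof. exact (continuous_mult f g x). Qed.
Lemma cR_opp (f : R -> R) x : continuous f x -> continuous (fun y => - f y) x.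
Proof. exact (continuous_opp f x). Qed.
Lemma cR_abs (f : R -> R) x : continuous f x -> continuous (fun y => Rabs (f y)) x.
Proof. exact (continuous_Rabs_comp f x). Qed.
Lemma cR_const (c : R) x : continuous (fun _ : R => c) x.
Proof. exact (continuous_const c x). Qed.
Lemma cR_id x : continuous (fun y : R => y) x.
Proof. exact (continuous_id x). Qed.

Lemma derive_cpt f x : (forall x, ex_derive f x) -> continuity_pt f x.
Proof. intros H. apply continuity_pt_filterlim. apply (@ex_derive_continuous R_AbsRing R_NormedModule f x). apply H. Qed.

Lemma good_lin a b : good (fun x y => x * a + y * b).
Proof.
  intros x y. apply continuity_2d_pt_plus; apply continuity_2d_pt_mult;
  auto using continuity_2d_pt_id1, continuity_2d_pt_id2, continuity_2d_pt_const.
Qed.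

Lemma good_cos_lin a b : good (fun x y => cos (x * a + y * b)).
Proof.
  intros x y. apply (continuity_1d_2d_pt_comp cos (fun x y => x * a + y * b)).
  apply continuity_cos. apply good_lin.
Qed.

Lemma good_comp1 (f : R -> R) : (forall x, continuity_pt f x) -> good (fun x y => f x).
Proof.
  intros H x y. apply (continuity_1d_2d_pt_comp f (fun x y => x)). apply H. apply continuity_2d_pt_id1.
Qed.
Lemma good_comp2 (f : R -> R) : (forall x, continuity_pt f x) -> good (fun x y => f y).
Proof.
  intros H x y. apply (continuity_1d_2d_pt_comp f (fun x y => y)). apply H. apply continuity_2d_pt_id2.
Qed.

Lemma rpow_cont c : 0 < c -> forall z, continuity_pt (fun t => rpow t c) z.
Proof.
  intros Hc z. destruct (Rlt_le_dec 0 z) as [Hz|Hz].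
  - assert (Hd : derivable_pt (fun x => Rpower x c) z).
    { exists (c * Rpower z (c - 1)). apply derivable_pt_lim_power. exact Hz. }
    pose proof (derivable_continuous_pt _ _ Hd) as Hct.
    intros eps Heps. destruct (Hct eps Heps) as [d [Hd0 Hd1]].
    exists (Rmin d z). split. apply Rmin_pos; auto.
    intros x [_ Hx]. simpl in Hx |- *. unfold R_dist in *.
    assert (Hx1 : Rabs (x - z) < d) by (eapply Rlt_le_trans; [exact Hx|apply Rmin_l]).
    assert (Hx2 : Rabs (x - z) < z) by (eapply Rlt_le_trans; [exact Hx|apply Rmin_r]).
    apply Rabs_lt_between' in Hx2.
    unfold rpow. destruct (Rle_dec x 0); [lra|]. destruct (Rle_dec z 0); [lra|].
    destruct (Req_dec x z) as [->|Hne]. rewrite Rminus_diag, Rabs_R0; exact Heps.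
    apply (Hd1 x). split. unfold D_x, no_cond. split. exact I. auto. exact Hx1.
  - destruct (Rle_lt_or_eq_dec _ _ Hz) as [Hz'|Hz'].
    + intros eps Heps. exists (- z). split. lra.
      intros x [_ Hx]. simpl in Hx |- *. unfold R_dist in *.
      apply Rabs_lt_between' in Hx.
      unfold rpow. destruct (Rle_dec x 0); [|lra]. destruct (Rle_dec z 0); [|lra].
      rewrite Rminus_diag, Rabs_R0. exact Heps.
    + subst z. intros eps Heps. exists (Rpower eps (/ c)). split. unfold Rpower. apply exp_pos.
      intros x [_ Hx]. simpl in Hx |- *. unfold R_dist in *.
      rewrite Rminus_0_r in Hx.
      unfold rpow at 2. destruct (Rle_dec 0 0); [|lra]. rewrite Rminus_0_r.
      unfold rpow. destruct (Rle_dec x 0). rewrite Rabs_R0. exact Heps.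
      rewrite Rabs_pos_eq by (unfold Rpower; apply Rlt_le, exp_pos).
      rewrite Rabs_pos_eq in Hx by lra.
      replace eps with (Rpower (Rpower eps (/ c)) c).
      apply Rlt_Rpower_l. exact Hc. lra.
      rewrite Rpower_mult. rewrite Rinv_l by lra. apply Rpower_1. exact Heps.
Qed.

Lemma rpow_nonneg t c : 0 <= rpow t c.
Proof. unfold rpow. destruct Rle_dec. lra. unfold Rpower. apply Rlt_le, exp_pos. Qed.

Lemma good_symb beta : 0 < beta -> good (symb beta).
Proof.
  intros Hb x y. unfold symb.
  apply (continuity_1d_2d_pt_comp (fun t => rpow t (beta/2)) (fun x y => 4 * sin (x/2) ^ 2 + 4 * sin (y/2) ^ 2)).
  apply rpow_cont. lra.
  apply continuity_2d_pt_plus.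
  - apply (good_comp1 (fun x => 4 * sin (x/2) ^ 2)). intros; apply derive_cpt. intros; auto_derive; auto.
  - apply (good_comp2 (fun x => 4 * sin (x/2) ^ 2)). intros; apply derive_cpt. intros; auto_derive; auto.
Qed.

Definition U (r x : R) : R := (2 - Rabs x / r + Rabs (2 - Rabs x / r)) / 2.

Lemma U_cont r x : continuity_pt (U r) x.
Proof.
  apply continuity_pt_filterlim. unfold U, Rdiv.
  assert (Hg : forall x, continuous (fun y => 2 - Rabs y * / r) x).
  { intros z. apply (cR_plus (fun _ => 2) (fun y => - (Rabs y * / r))). apply cR_const.
    apply (cR_opp (fun y => Rabs y * / r)). apply (cR_mult (fun y => Rabs y) (fun _ => / r)).
    apply (cR_abs (fun y => y)). apply cR_id. apply cR_const. }
  apply (cR_mult (fun y => (2 - Rabs y * / r) + Rabs (2 - Rabs y * / r)) (fun _ => / 2)).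
  apply (cR_plus (fun y => 2 - Rabs y * / r) (fun y => Rabs (2 - Rabs y * / r))). apply Hg.
  apply (cR_abs (fun y => 2 - Rabs y * / r)). apply Hg. apply cR_const.
Qed.

Lemma U_props r x : 0 < r ->
  0 <= U r x /\ U r x <= 2 /\ (Rabs x < r -> 1 <= U r x) /\ (2 * r <= Rabs x -> U r x = 0).
Proof.
  intros Hr. unfold U.
  assert (H0 : 0 <= Rabs x / r) by (apply Rdiv_le_0_compat; [apply Rabs_pos|lra]).
  split; [|split; [|split]].
  - destruct (Rle_dec 0 (2 - Rabs x / r)).
    rewrite (Rabs_pos_eq (2 - Rabs x / r)) by lra. lra. rewrite (Rabs_left (2 - Rabs x / r)) by lra. lra.
  - destruct (Rle_dec 0 (2 - Rabs x / r)).
    rewrite (Rabs_pos_eq (2 - Rabs x / r)) by lra. lra. rewrite (Rabs_left (2 - Rabs x / r)) by lra. lra.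
  - intros Hx. assert (Rabs x / r < 1).
    { apply (Rmult_lt_reg_r r). lra. unfold Rdiv. rewrite Rmult_assoc, Rinv_l by lra. lra. }
    rewrite (Rabs_pos_eq (2 - Rabs x / r)) by lra. lra.
  - intros Hx. assert (2 <= Rabs x / r).
    { apply (Rmult_le_reg_r r). lra. unfold Rdiv. rewrite Rmult_assoc, Rinv_l by lra. lra. }
    destruct (Rle_dec 0 (2 - Rabs x / r)).
    rewrite (Rabs_pos_eq (2 - Rabs x / r)) by lra. lra. rewrite (Rabs_left (2 - Rabs x / r)) by lra. lra.
Qed.

Lemma good_UU r : good (fun x y => U r x * U r y).
Proof.
  apply good_mult. apply (good_comp1 (U r)). apply U_cont. apply (good_comp2 (U r)). apply U_cont.
Qed.


Lemma sin_approx1 a : sin_approx a 1 = a - a ^ 3 / 6.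
Proof. unfold sin_approx, sin_term. simpl. field. Qed.

Lemma sin_half_lb r x : 0 < r <= 1 -> r <= Rabs x <= PI -> r ^ 2 / 4 <= 4 * sin (x / 2) ^ 2.
Proof.
  intros Hr Hx. pose proof PI2_3_2.
  assert (Heq : sin (x / 2) ^ 2 = sin (Rabs x / 2) ^ 2).
  { destruct (Rle_dec 0 x). rewrite Rabs_pos_eq by lra. reflexivity.
    rewrite Rabs_left by lra. replace (- x / 2) with (- (x / 2)) by field. rewrite sin_neg. ring. }
  rewrite Heq.
  assert (H1 : sin (r / 2) <= sin (Rabs x / 2)) by (apply sin_incr_1; lra).
  pose proof (sin_bound (r / 2) 0) as Hb. simpl (2 * 0 + 1)%nat in Hb.
  rewrite sin_approx1 in Hb. destruct Hb as [Hb _]; try lra.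
  assert (H2 : r / 4 <= sin (r / 2)) by nra.
  assert (H3 : r / 4 <= sin (Rabs x / 2)) by lra.
  nra.
Qed.

Lemma sin2_le1 x : 4 * sin (x / 2) ^ 2 <= 4.
Proof. pose proof (SIN_bound (x / 2)). nra. Qed.

Lemma symb_upper beta x y : 0 < beta -> symb beta x y <= Rpower 8 (beta / 2).
Proof.
  intros Hb. unfold symb, rpow. destruct Rle_dec.
  unfold Rpower; apply Rlt_le, exp_pos.
  apply Rle_Rpower_l. lra. split. lra.
  pose proof (sin2_le1 x). pose proof (sin2_le1 y). lra.
Qed.

Lemma symb_lower beta r x y : 0 < beta -> 0 < r <= 1 -> Rabs x <= PI -> Rabs y <= PI ->
  Rpower (r ^ 2 / 4) (beta / 2) * (1 - U r x * U r y) <= symb beta x y.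
Proof.
  intros Hb Hr Hx Hy.
  destruct (U_props r x (proj1 Hr)) as [Ux0 [Ux2 [Ux1 _]]].
  destruct (U_props r y (proj1 Hr)) as [Uy0 [Uy2 [Uy1 _]]].
  assert (Hp : 0 < Rpower (r ^ 2 / 4) (beta / 2)) by (unfold Rpower; apply exp_pos).
  assert (Ha : 0 <= 4 * sin (x / 2) ^ 2) by nra.
  assert (Hb' : 0 <= 4 * sin (y / 2) ^ 2) by nra.
  assert (Hbig : r ^ 2 / 4 <= 4 * sin (x / 2) ^ 2 + 4 * sin (y / 2) ^ 2 ->
     Rpower (r ^ 2 / 4) (beta / 2) * (1 - U r x * U r y) <= symb beta x y).
  { intros Ht. unfold symb, rpow. destruct Rle_dec. nra.
    apply Rle_trans with (Rpower (r ^ 2 / 4) (beta / 2)).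
    assert (0 <= U r x * U r y) by nra. nra.
    apply Rle_Rpower_l. lra. split. nra. exact Ht. }
  destruct (Rlt_le_dec (Rabs x) r) as [Hxr|Hxr].
  - destruct (Rlt_le_dec (Rabs y) r) as [Hyr|Hyr].
    + specialize (Ux1 Hxr). specialize (Uy1 Hyr).
      assert (HU : 1 - U r x * U r y <= 0) by nra.
      apply Rle_trans with 0. nra. apply rpow_nonneg.
    + apply Hbig. pose proof (sin_half_lb r y Hr (conj Hyr Hy)). lra.
  - apply Hbig. pose proof (sin_half_lb r x Hr (conj Hxr Hx)). lra.
Qed.

Lemma U_ex r a b : ex_RInt (U r) a b.
Proof.
  apply (@ex_RInt_continuous R_CompleteNormedModule). intros z _.
  apply continuity_pt_filterlim. apply U_cont.
Qed.

Lemma U_int r : 0 < r -> 2 * r <= PI -> 0 <= RInt (U r) (- PI) PI <= 8 * r.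
Proof.
  intros Hr HrP. split.
  - apply RInt_ge_0. lra. apply U_ex. intros x _. apply (U_props r x Hr).
  - rewrite <- (RInt_Chasles (V:=R_CompleteNormedModule) (U r) (-PI) (- (2 * r)) PI) by apply U_ex.
    rewrite <- (RInt_Chasles (V:=R_CompleteNormedModule) (U r) (- (2 * r)) (2 * r) PI) by apply U_ex.
    rewrite (RInt_ext (U r) (fun _ => 0) (-PI) (- (2 * r))).
    2:{ intros x Hx. rewrite Rmin_left in Hx by lra. rewrite Rmax_right in Hx by lra.
        apply (U_props r x Hr). rewrite Rabs_left by lra. lra. }
    rewrite (RInt_ext (U r) (fun _ => 0) (2 * r) PI).
    2:{ intros x Hx. rewrite Rmin_left in Hx by lra. rewrite Rmax_right in Hx by lra.
        apply (U_props r x Hr). rewrite Rabs_pos_eq by lra. lra. }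
    rewrite !RInt_const. unfold plus, scal; simpl; unfold mult; simpl.
    assert (RInt (U r) (- (2 * r)) (2 * r) <= RInt (fun _ => 2) (- (2 * r)) (2 * r)).
    { apply RInt_le. lra. apply U_ex. apply ex_RInt_const. intros x _. apply (U_props r x Hr). }
    rewrite RInt_const in H. unfold scal in H; simpl in H; unfold mult in H; simpl in H. lra.
Qed.


Lemma sumR_ext_loc (u v : nat -> R) n m : (forall k, (n <= k <= m)%nat -> u k = v k) -> sum_n_m u n m = sum_n_m v n m.
Proof. exact (sum_n_m_ext_loc u v n m). Qed.

Lemma gsum_ext_loc M F G :
  (forall p q : nat, (1 <= p <= M - 1)%nat -> (1 <= q <= M - 1)%nat ->
     F (Z.of_nat p) (Z.of_nat q) = G (Z.of_nat p) (Z.of_nat q)) -> gsum M F = gsum M G.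
Proof.
  intros H. unfold gsum. apply sumR_ext_loc. intros p Hp. apply sumR_ext_loc. intros q Hq. apply H; auto.
Qed.

Lemma good_gsum M (F : Z -> Z -> R -> R -> R) : (forall p q, good (F p q)) ->
  good (fun x y => gsum M (fun p q => F p q x y)).
Proof.
  intros HF. unfold gsum.
  apply (good_sum (fun p x y => sum_n_m (fun q => F (Z.of_nat p) (Z.of_nat q) x y) 1 (M - 1))).
  intros p. apply (good_sum (fun q x y => F (Z.of_nat p) (Z.of_nat q) x y)). intros q. apply HF.
Qed.

Lemma I2_gsum M (F : Z -> Z -> R -> R -> R) : (forall p q, good (F p q)) ->
  I2 (fun x y => gsum M (fun p q => F p q x y)) = gsum M (fun p q => I2 (F p q)).
Proof.
  intros HF. unfold gsum.
  rewrite (I2_sum (fun p x y => sum_n_m (fun q => F (Z.of_nat p) (Z.of_nat q) x y) 1 (M - 1))).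
  2:{ intros p. apply (good_sum (fun q x y => F (Z.of_nat p) (Z.of_nat q) x y)). intros q. apply HF. }
  apply sumR_ext. intros p.
  rewrite (I2_sum (fun q x y => F (Z.of_nat p) (Z.of_nat q) x y)). reflexivity.
  intros q. apply HF.
Qed.

Definition A (p q : Z) (x y : R) : R := x * IZR p + y * IZR q.

Definition Gf M (psi : Z -> Z -> R) (x y : R) : R :=
  gsum M (fun j k => gsum M (fun p q => psi p q * psi j k * cos (A p q x y - A j k x y))).

Definition Ssq M (psi : Z -> Z -> R) : R := gsum M (fun j k => psi j k * psi j k).

Lemma A_diff p q j k x y : A p q x y - A j k x y = x * IZR (p - j) + y * IZR (q - k).
Proof. unfold A. rewrite !minus_IZR. ring. Qed.

Lemma gsum_sq M F : gsum M F * gsum M F = gsum M (fun j k => gsum M (fun p q => F p q * F j k)).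
Proof.
  rewrite (gsum_mult_l M (gsum M F) F). apply gsum_ext. intros j k.
  rewrite Rmult_comm, gsum_mult_l. apply gsum_ext. intros p q. ring.
Qed.

Lemma G_sq M psi x y : Gf M psi x y =
  gsum M (fun p q => psi p q * cos (A p q x y)) * gsum M (fun p q => psi p q * cos (A p q x y))
  + gsum M (fun p q => psi p q * sin (A p q x y)) * gsum M (fun p q => psi p q * sin (A p q x y)).
Proof.
  rewrite !gsum_sq, <- gsum_plus. unfold Gf. apply gsum_ext. intros j k.
  rewrite <- gsum_plus. apply gsum_ext. intros p q. rewrite cos_minus. ring.
Qed.

Lemma G_nonneg M psi x y : 0 <= Gf M psi x y.
Proof. rewrite G_sq. apply Rplus_le_le_0_compat; apply Rle_0_sqr. Qed.

Lemma G_le M psi x y : Gf M psi x y <= INR (M - 1) * INR (M - 1) * Ssq M psi.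
Proof.
  unfold Gf.
  apply Rle_trans with (gsum M (fun j k => gsum M (fun p q => psi p q * psi p q / 2 + psi j k * psi j k / 2))).
  { apply gsum_le. intros j k. apply gsum_le. intros p q.
    pose proof (COS_bound (A p q x y - A j k x y)) as Hc.
    set (a := psi p q) in *. set (b := psi j k) in *. set (c := cos (A p q x y - A j k x y)) in *.
    pose proof (pow2_ge_0 (a - b)). pose proof (pow2_ge_0 (a + b)).
    destruct (Rle_dec 0 (a * b)); nra. }
  rewrite (gsum_ext M _ (fun j k => / 2 * Ssq M psi + INR (M - 1) * (INR (M - 1) * (psi j k * psi j k / 2)))).
  2:{ intros j k. rewrite gsum_plus, gsum_const. unfold Ssq. rewrite gsum_mult_l.
      f_equal. apply gsum_ext. intros; field. }
  rewrite gsum_plus, gsum_const. rewrite <- gsum_mult_l, <- gsum_mult_l. unfold Ssq.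
  rewrite (gsum_ext M (fun p q => psi p q * psi p q / 2) (fun p q => / 2 * (psi p q * psi p q))) by (intros; field).
  rewrite <- gsum_mult_l. lra.
Qed.

Lemma good_term a b : good (fun x y => a * cos (x * b) ) -> True.
Proof. auto. Qed.

Lemma good_Gterm (c : R) p q j k : good (fun x y => c * cos (A p q x y - A j k x y)).
Proof.
  intros x y. apply (continuity_2d_pt_ext (fun x y => c * cos (x * IZR (p - j) + y * IZR (q - k)))).
  intros. rewrite A_diff. reflexivity.
  apply good_mult. apply good_const. apply good_cos_lin.
Qed.

Lemma I2_G M psi : I2 (Gf M psi) = 4 * PI ^ 2 * Ssq M psi.
Proof.
  unfold Gf.
  rewrite (I2_gsum M (fun j k x y => gsum M (fun p q => psi p q * psi j k * cos (A p q x y - A j k x y)))).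
  2:{ intros j k. apply (good_gsum M (fun p q x y => psi p q * psi j k * cos (A p q x y - A j k x y))).
      intros p q. apply good_Gterm. }
  unfold Ssq. rewrite gsum_mult_l.
  apply gsum_ext_loc. intros j k Hj Hk.
  rewrite (I2_gsum M (fun p q x y => psi p q * psi (Z.of_nat j) (Z.of_nat k) * cos (A p q x y - A (Z.of_nat j) (Z.of_nat k) x y))).
  2:{ intros p q. apply good_Gterm. }
  rewrite (gsum_ext M _ (fun p q => (psi p q * psi (Z.of_nat j) (Z.of_nat k)) * orth (p - Z.of_nat j) (q - Z.of_nat k))).
  rewrite gsum_delta by auto. ring.
  intros p q. rewrite <- I2_orth. rewrite <- I2_scal by apply good_cos_lin.
  f_equal. extensionality x. extensionality y. rewrite A_diff. reflexivity.
Qed.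


Lemma acoef_I2 beta p q j k : acoef beta (p - j) (q - k) =
  / (4 * PI ^ 2) * I2 (fun x y => symb beta x y * cos (A p q x y - A j k x y)).
Proof.
  unfold acoef, I2. f_equal. f_equal. extensionality x. f_equal. extensionality y.
  rewrite A_diff. reflexivity.
Qed.

Lemma good_Gf M psi : good (Gf M psi).
Proof.
  unfold Gf.
  apply (good_gsum M (fun j k x y => gsum M (fun p q => psi p q * psi j k * cos (A p q x y - A j k x y)))).
  intros j k. apply (good_gsum M (fun p q x y => psi p q * psi j k * cos (A p q x y - A j k x y))).
  intros p q. apply good_Gterm.
Qed.

Lemma gsum_mult_lr M c d F : (c * gsum M F) * d = gsum M (fun p q => c * F p q * d).
Proof.
  rewrite Rmult_comm, gsum_mult_l, gsum_mult_l. apply gsum_ext. intros; ring.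
Qed.

Lemma Q_eq beta h M psi : 0 < beta ->
  inner_h h M (frac_lap beta h M psi) psi =
  h ^ 2 * / Rpower h beta * / (4 * PI ^ 2) * I2 (fun x y => symb beta x y * Gf M psi x y).
Proof.
  intros Hb. unfold inner_h, frac_lap.
  assert (Hg : forall p q j k, good (fun x y => psi p q * psi j k * (symb beta x y * cos (A p q x y - A j k x y)))).
  { intros p q j k. apply good_mult. apply good_const. apply good_mult. apply good_symb; auto.
    intros x y. apply (continuity_2d_pt_ext (fun x y => cos (x * IZR (p - j) + y * IZR (q - k)))).
    intros. rewrite A_diff. reflexivity. apply good_cos_lin. }
  replace (fun x y => symb beta x y * Gf M psi x y) with
    (fun x y => gsum M (fun j k => gsum M (fun p q => psi p q * psi j k * (symb beta x y * cos (A p q x y - A j k x y))))).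
  2:{ extensionality x. extensionality y. unfold Gf. rewrite gsum_mult_l. apply gsum_ext. intros j k.
      rewrite gsum_mult_l. apply gsum_ext. intros p q. ring. }
  rewrite (I2_gsum M (fun j k x y => gsum M (fun p q => psi p q * psi j k * (symb beta x y * cos (A p q x y - A j k x y))))).
  2:{ intros j k. apply (good_gsum M (fun p q x y => psi p q * psi j k * (symb beta x y * cos (A p q x y - A j k x y)))). auto. }
  rewrite (Rmult_assoc (h ^ 2 * / Rpower h beta)), (Rmult_assoc (h ^ 2)).
  f_equal. rewrite !gsum_mult_l. apply gsum_ext. intros j k.
  rewrite gsum_mult_lr.
  rewrite (I2_gsum M (fun p q x y => psi p q * psi j k * (symb beta x y * cos (A p q x y - A j k x y)))) by auto.
  rewrite !gsum_mult_l. apply gsum_ext. intros p q.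
  rewrite I2_scal. rewrite acoef_I2. ring.
  apply good_mult. apply good_symb; auto.
  intros x y. apply (continuity_2d_pt_ext (fun x y => cos (x * IZR (p - j) + y * IZR (q - k)))).
  intros. rewrite A_diff. reflexivity. apply good_cos_lin.
Qed.


Lemma RInt_scalR (f : R -> R) a b c : ex_RInt f a b -> RInt (fun x => c * f x) a b = c * RInt f a b.
Proof. intros H. exact (RInt_scal (V:=R_CompleteNormedModule) f a b c H). Qed.

Lemma I2_UU r K : I2 (fun x y => U r x * U r y * K) = K * (RInt (U r) (- PI) PI * RInt (U r) (- PI) PI).
Proof.
  unfold I2.
  rewrite (RInt_ext _ (fun x => (K * RInt (U r) (- PI) PI) * U r x)).
  rewrite RInt_scalR by apply U_ex. ring.
  intros x _. change (RInt (fun y => U r x * U r y * K) (- PI) PI = K * RInt (U r) (- PI) PI * U r x). rewrite (RInt_ext _ (fun y => (U r x * K) * U r y)).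
  2:{ intros y _. change (U r x * U r y * K = U r x * K * U r y). ring. }
  rewrite RInt_scalR by apply U_ex. change (U r x * K * RInt (U r) (- PI) PI = K * RInt (U r) (- PI) PI * U r x). ring.
Qed.


Lemma Rpower_sq x c : 0 < x -> Rpower (x ^ 2) c = Rpower x (2 * c).
Proof.
  intros Hx. rewrite <- (Rpower_pow 2 x Hx). rewrite Rpower_mult. f_equal.
Qed.

Lemma Rpower_pos x c : 0 < Rpower x c.
Proof. unfold Rpower. apply exp_pos. Qed.

Theorem lemma2p10 (beta : R) (Hb : 1 < beta < 2) (L : R) (HL : 0 < L) :
  exists C : R, 0 < C /\
    forall (M : nat) (psi : Z -> Z -> R),
      (1 <= M)%nat -> supported M psi ->
      let h := 2 * L / INR M in
      C * Rpower (2 / PI) beta * Rpower 2 ((beta - 2) / 2) / (4 * PI ^ 2)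
        * inner_h h M psi psi
      <= inner_h h M (frac_lap beta h M psi) psi
      /\ inner_h h M (frac_lap beta h M psi) psi
         <= Rpower 2 (beta / 2) * Rpower PI beta / Rpower h beta
            * inner_h h M psi psi.
Proof.
  assert (Hb0 : 0 < beta) by lra.
  pose proof PI_RGT_0 as HPI. pose proof PI2_3_2 as HPI3.
  set (K0 := Rpower (2 / PI) beta * Rpower 2 ((beta - 2) / 2) / (4 * PI ^ 2)).
  assert (HK0 : 0 < K0).
  { unfold K0. apply Rdiv_lt_0_compat. apply Rmult_lt_0_compat; apply Rpower_pos.
    apply Rmult_lt_0_compat. lra. apply pow_lt. lra. }
  set (rho := Rpower (/ (32 * L)) beta).
  assert (Hrho : 0 < rho) by apply Rpower_pos.
  exists (/ 2 * rho / K0). split.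
  { apply Rdiv_lt_0_compat; [|exact HK0]. apply Rmult_lt_0_compat; lra. }
  intros M psi HM Hsupp h.
  assert (HMr : 1 <= INR M) by (apply (le_INR 1) in HM; simpl in HM; exact HM).
  assert (Hh : 0 < h) by (unfold h; apply Rdiv_lt_0_compat; lra).
  set (r := / (8 * INR M)).
  assert (Hmr : 8 * INR M * r = 1) by (unfold r; field; lra).
  assert (Hr : 0 < r <= 1).
  { unfold r. split. apply Rinv_0_lt_compat. lra. rewrite <- Rinv_1. apply Rinv_le_contravar; lra. }
  assert (Hr2 : 2 * r <= PI) by lra.
  set (c := beta / 2).
  set (V := I2 (fun x y => symb beta x y * Gf M psi x y)).
  set (S := Ssq M psi).
  assert (HS : 0 <= S).
  { unfold S, Ssq. apply Rle_trans with (gsum M (fun _ _ => 0)).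
    rewrite gsum_const. lra. apply gsum_le. intros. apply Rle_0_sqr. }
  assert (Hinner : inner_h h M psi psi = h ^ 2 * S) by reflexivity.
  rewrite Q_eq by lra. rewrite Hinner. fold V.
  assert (HIG : I2 (Gf M psi) = 4 * PI ^ 2 * S) by apply I2_G.
  assert (HgS : good (symb beta)) by (apply good_symb; lra).
  assert (HgG : good (Gf M psi)) by apply good_Gf.
  assert (Hg1 : good (fun x y => 1 - U r x * U r y)).
  { intros x y. apply continuity_2d_pt_minus. apply continuity_2d_pt_const. apply good_UU. }
  assert (HVu : V <= Rpower 8 c * (4 * PI ^ 2 * S)).
  { unfold V. rewrite <- HIG, <- I2_scal by exact HgG. apply I2_le.
    apply good_mult; auto. apply good_mult; auto. apply good_const.
    intros x y _ _. apply Rmult_le_compat_r. apply G_nonneg. apply symb_upper. lra. }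
  set (tc := Rpower (r ^ 2 / 4) c).
  assert (HV1 : tc * I2 (fun x y => (1 - U r x * U r y) * Gf M psi x y) <= V).
  { unfold V. rewrite <- I2_scal by (apply good_mult; auto). apply I2_le.
    apply good_mult. apply good_const. apply good_mult; auto.
    apply good_mult; auto.
    intros x y Hx Hy. rewrite <- Rmult_assoc. apply Rmult_le_compat_r. apply G_nonneg.
    apply symb_lower; auto; apply Rabs_le; lra. }
  assert (HV2 : I2 (fun x y => (1 - U r x * U r y) * Gf M psi x y)
                = 4 * PI ^ 2 * S - I2 (fun x y => U r x * U r y * Gf M psi x y)).
  { replace (fun x y => (1 - U r x * U r y) * Gf M psi x y) with
      (fun x y => Gf M psi x y + (-1) * (U r x * U r y * Gf M psi x y)).
    2:{ extensionality x. extensionality y. ring. }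
    rewrite I2_plus, I2_scal, HIG. ring.
    apply good_mult; auto. apply good_UU. auto.
    apply good_mult. apply good_const. apply good_mult; auto. apply good_UU. }
  set (IU := RInt (U r) (- PI) PI).
  assert (HIU : 0 <= IU <= 8 * r) by (apply U_int; lra).
  assert (HV3 : I2 (fun x y => U r x * U r y * Gf M psi x y) <= INR (M - 1) * INR (M - 1) * S * (IU * IU)).
  { unfold IU. rewrite <- I2_UU. apply I2_le.
    apply good_mult; auto. apply good_UU. apply good_mult. apply good_UU. apply good_const.
    intros x y _ _. apply Rmult_le_compat_l.
    destruct (U_props r x (proj1 Hr)) as [? _]. destruct (U_props r y (proj1 Hr)) as [? _]. nra.
    apply G_le. }
  assert (HN : INR (M - 1) * INR (M - 1) * (IU * IU) <= 1).
  { assert (HN0 : 0 <= INR (M - 1)) by apply pos_INR.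
    assert (HN1 : INR (M - 1) <= INR M) by (apply le_INR; lia).
    assert (HP : INR (M - 1) * IU <= 1).
    { apply Rle_trans with (INR M * (8 * r)). apply Rmult_le_compat; lra. lra. }
    assert (HP0 : 0 <= INR (M - 1) * IU) by nra. nra. }
  assert (HVl : tc * (4 * PI ^ 2 * S - S) <= V).
  { eapply Rle_trans; [|exact HV1]. rewrite HV2. apply Rmult_le_compat_l.
    unfold tc; apply Rlt_le, Rpower_pos. nra. }
  set (P := Rpower h beta).
  assert (HP : 0 < P) by apply Rpower_pos.
  assert (Htc : tc = rho * P).
  { unfold tc, rho, P, c.
    replace (r ^ 2 / 4) with ((/ (16 * INR M)) ^ 2) by (unfold r; field; lra).
    rewrite Rpower_sq by (apply Rinv_0_lt_compat; lra).
    replace (2 * (beta / 2)) with beta by field.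
    rewrite Rpower_mult_distr. f_equal. unfold h. field. split; lra.
    apply Rinv_0_lt_compat; lra. exact Hh. }
  assert (H8 : Rpower 8 c <= Rpower 2 c * Rpower PI beta).
  { replace (Rpower PI beta) with (Rpower (PI ^ 2) c).
    rewrite Rpower_mult_distr by (try apply pow_lt; lra).
    apply Rle_Rpower_l. unfold c; lra. split. lra. nra.
    rewrite Rpower_sq by lra. f_equal. unfold c; field. }
  assert (HPc : 0 < Rpower 8 c) by apply Rpower_pos.
  assert (H4 : 0 < 4 * PI ^ 2) by (apply Rmult_lt_0_compat; [lra|apply pow_lt; lra]).
  assert (Hh2 : 0 < h ^ 2) by (apply pow_lt; lra).
  split.
  - assert (HLe : / 2 * rho / K0 * Rpower (2 / PI) beta * Rpower 2 ((beta - 2) / 2) / (4 * PI ^ 2) = / 2 * rho).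
    { unfold K0. field. repeat split; try lra; apply Rgt_not_eq; apply Rpower_pos. }
    rewrite HLe.
    apply Rle_trans with (h ^ 2 * / P * / (4 * PI ^ 2) * (tc * (4 * PI ^ 2 * S - S))).
    + rewrite Htc.
      replace (h ^ 2 * / P * / (4 * PI ^ 2) * (rho * P * (4 * PI ^ 2 * S - S)))
        with (h ^ 2 * rho * S * (1 - / (4 * PI ^ 2))) by (field; lra).
      assert (/ (4 * PI ^ 2) <= / 2).
      { apply Rinv_le_contravar. lra. nra. }
      assert (0 <= h ^ 2 * rho * S) by (apply Rmult_le_pos; [nra|lra]).
      nra.
    + apply Rmult_le_compat_l. apply Rlt_le. apply Rmult_lt_0_compat.
      apply Rmult_lt_0_compat. lra. apply Rinv_0_lt_compat; lra. apply Rinv_0_lt_compat; lra.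
      exact HVl.
  - apply Rle_trans with (h ^ 2 * / P * / (4 * PI ^ 2) * (Rpower 8 c * (4 * PI ^ 2 * S))).
    + apply Rmult_le_compat_l. apply Rlt_le. apply Rmult_lt_0_compat.
      apply Rmult_lt_0_compat. lra. apply Rinv_0_lt_compat; lra. apply Rinv_0_lt_compat; lra.
      exact HVu.
    + replace (h ^ 2 * / P * / (4 * PI ^ 2) * (Rpower 8 c * (4 * PI ^ 2 * S)))
        with (Rpower 8 c / P * (h ^ 2 * S)) by (field; lra).
      fold c. apply Rmult_le_compat_r. nra.
      unfold Rdiv. apply Rmult_le_compat_r. apply Rlt_le, Rinv_0_lt_compat; lra. exact H8.
Qed.
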